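(* Let $N=\begin{pmatrix}0&1&0\\0&0&1\\0&0&0\end{pmatrix}$, $\xi=(x,y,z)^T$, and $d\ge1$. Then the set $W_d=\{\hat e_3\,p(x,y):p\in P^2_d\}$, $\hat e_3=(0,0,1)^T$, is a complement in $V^3_d$ to $\mathrm{rng}(\mathrm{ad}_N)\cap V^3_d$, i.e. $V^3_d=(\mathrm{rng}(\mathrm{ad}_N)\cap V^3_d)\oplus W_d$, where $\mathrm{rng}(\mathrm{ad}_N)$ is the image of $\mathrm{ad}_N$ on $F^3_d$.
   Context: $P^2_d$ is the space of real homogeneous polynomials of degree $d$ in $(x,y)$. $F^3_d$ is the space of vector fields on $\mathbb{R}^3$ with components real homogeneous polynomials of degree $d$ in $(x,y,z)$, and $V^3_d=\{v\in F^3_d:\nabla\cdot v=0\}$. $\mathrm{ad}_N h(\xi)=Dh(\xi)N\xi-Nh(\xi)$. *)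

(* Defs.v *)
From HB Require Import structures.
From mathcomp Require Import all_boot all_order all_algebra.
From mathcomp Require Import mpoly.
Set Implicit Arguments. Unset Strict Implicit. Unset Printing Implicit Defensive.
Import Order.TTheory GRing.Theory Num.Theory.
Local Open Scope ring_scope.

(* Coordinates xi = (x, y, z) of R^3 are the variables 'X_0, 'X_1, 'X_2
   of {mpoly R[3]}. *)
Definition i0 : 'I_3 := @Ordinal 3 0 isT.
Definition i1 : 'I_3 := @Ordinal 3 1 isT.
Definition i2 : 'I_3 := @Ordinal 3 2 isT.

Definition vfield (R : ringType) := 'I_3 -> {mpoly R[3]}.

Definition xi (R : ringType) : vfield R := fun i => 'X_i.

Definition Nmat (R : ringType) : 'M[R]_3 :=
  \matrix_(i < 3, j < 3) (if (j : nat) == (i : nat).+1 then 1 else 0).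

Definition mxvf (R : ringType) (A : 'M[R]_3) (v : vfield R) : vfield R :=
  fun i => \sum_(j < 3) A i j *: v j.

Definition jac_apply (R : ringType) (h u : vfield R) : vfield R :=
  fun i => \sum_(j < 3) (h i)^`M(j) * u j.

Definition adN (R : ringType) (h : vfield R) : vfield R :=
  fun i => jac_apply h (mxvf (Nmat R) (xi R)) i - mxvf (Nmat R) h i.

Definition F3 (R : ringType) (d : nat) (v : vfield R) : Prop :=
  forall i, v i \is d.-homog.

Definition divergence (R : ringType) (v : vfield R) : {mpoly R[3]} :=
  \sum_(i < 3) (v i)^`M(i).

Definition V3 (R : ringType) (d : nat) (v : vfield R) : Prop :=
  F3 d v /\ divergence v = 0.

Definition rng_adN (R : ringType) (d : nat) (v : vfield R) : Prop :=
  exists2 h : vfield R, F3 d h & forall i, v i = adN h i.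

(* W_d = { e3 p(x,y) : p in P^2_d } ; P^2_d = homogeneous polys of degree d
   in two variables (x,y), embedded in R[x,y,z] by substitution. *)
Definition embed_xy (R : ringType) (p : {mpoly R[2]}) : {mpoly R[3]} :=
  p \mPo [tuple ('X_i0 : {mpoly R[3]}); 'X_i1].

Definition Wd (R : ringType) (d : nat) (v : vfield R) : Prop :=
  exists2 p : {mpoly R[2]}, p \is d.-homog &
    forall i, v i = if i == i2 then embed_xy p else 0.

Definition direct_sum_decomp (R : ringType) (V A B : vfield R -> Prop) : Prop :=
  [/\ (forall a, A a -> V a), (forall b, B b -> V b),
      (forall v, V v -> exists a, exists b, [/\ A a, B b & forall i, v i = a i + b i])
    & (forall v, A v -> B v -> forall i, v i = 0)].

(* Main.v *)
Require Import Defs.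
From HB Require Import structures.
From mathcomp Require Import all_boot all_order all_algebra.
From mathcomp Require Import mpoly.
From mathcomp Require Import ring lra zify.
Set Implicit Arguments. Unset Strict Implicit. Unset Printing Implicit Defensive.
Import Order.TTheory GRing.Theory Num.Theory.
Local Open Scope ring_scope.

Section S.
Variable R : realFieldType.
Implicit Types f g : {mpoly R[3]}.

Definition Dop f : {mpoly R[3]} := 'X_i1 * f^`M(i0) + 'X_i2 * f^`M(i1).
Definition Dst f : {mpoly R[3]} := 'X_i0 * f^`M(i1) + 'X_i1 * f^`M(i2).

Lemma mxvfN (h : vfield R) j : mxvf (Nmat R) h j =
  if j == i0 then h i1 else if j == i1 then h i2 else 0.
Proof.
rewrite /mxvf big_ord_recr /= big_ord_recr /= big_ord_recr /= big_ord0 add0r.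
rewrite !mxE.
case: j => [[|[|[|j]]] hj] //=; rewrite /i0 /i1 /i2 /=;
  rewrite ?scale1r ?scale0r ?add0r ?addr0 //; congr h; exact: val_inj.
Qed.

Lemma adN0 (h : vfield R) : adN h i0 = Dop (h i0) - h i1.
Proof.
rewrite /adN /jac_apply !mxvfN /xi /= big_ord_recr /= big_ord_recr /= big_ord_recr /= big_ord0 add0r.
rewrite !mxvfN /Dop.
have -> : (ord_max : 'I_3) = i2 by exact: val_inj.
have -> : (widen_ord (leqnSn 2) ord_max : 'I_3) = i1 by exact: val_inj.
have -> : (widen_ord (leqnSn 2) (widen_ord (leqnSn 1) ord_max) : 'I_3) = i0 by exact: val_inj.
by rewrite /= mulr0 addr0 (mulrC 'X_i1) (mulrC 'X_i2).
Qed.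

Lemma adN1 (h : vfield R) : adN h i1 = Dop (h i1) - h i2.
Proof.
rewrite /adN /jac_apply !mxvfN /xi /= big_ord_recr /= big_ord_recr /= big_ord_recr /= big_ord0 add0r.
rewrite !mxvfN /Dop.
have -> : (ord_max : 'I_3) = i2 by exact: val_inj.
have -> : (widen_ord (leqnSn 2) ord_max : 'I_3) = i1 by exact: val_inj.
have -> : (widen_ord (leqnSn 2) (widen_ord (leqnSn 1) ord_max) : 'I_3) = i0 by exact: val_inj.
by rewrite /= mulr0 addr0 (mulrC 'X_i1) (mulrC 'X_i2).
Qed.

Lemma adN2 (h : vfield R) : adN h i2 = Dop (h i2).
Proof.
rewrite /adN /jac_apply !mxvfN /xi /= big_ord_recr /= big_ord_recr /= big_ord_recr /= big_ord0 add0r.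
rewrite !mxvfN /Dop.
have -> : (ord_max : 'I_3) = i2 by exact: val_inj.
have -> : (widen_ord (leqnSn 2) ord_max : 'I_3) = i1 by exact: val_inj.
have -> : (widen_ord (leqnSn 2) (widen_ord (leqnSn 1) ord_max) : 'I_3) = i0 by exact: val_inj.
by rewrite /= mulr0 addr0 subr0 (mulrC 'X_i1) (mulrC 'X_i2).
Qed.


Definition mfac (m : 'X_{1..3}) : R := (\prod_(i < 3) (m i)`!)%:R.

Lemma mfac_neq0 (m : 'X_{1..3}) : mfac m != 0.
Proof. by rewrite /mfac pnatr_eq0 -lt0n prodn_gt0 // => i; exact: fact_gt0. Qed.

Lemma mfacS (m : 'X_{1..3}) (i : 'I_3) : (0 < m i)%N -> mfac m = (m i)%:R * mfac (m - U_(i))%MM.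
Proof.
move=> hi; rewrite /mfac -natrM; congr (_%:R).
rewrite (bigD1 i) //= [in RHS](bigD1 i) //= mnmBE mnm1E eqxx.
case: (m i) hi => // k _; rewrite subSS subn0 factS mulnA; congr (_ * _)%N.
by apply: eq_bigr => j hj; rewrite mnmBE mnm1E eq_sym (negbTE hj) subn0.
Qed.

Variable K : nat.

Definition fp f g : R := \sum_(m : 'X_{1..3 < K}) f@_m * g@_m * mfac m.

Lemma fpC f g : fp f g = fp g f.
Proof. by apply: eq_bigr => m _; rewrite (mulrC f@_m). Qed.

Lemma fpDl f1 f2 g : fp (f1 + f2) g = fp f1 g + fp f2 g.
Proof. by rewrite /fp -big_split; apply: eq_bigr => m _; rewrite mcoeffD !mulrDl. Qed.

Lemma fpZl c f g : fp (c *: f) g = c * fp f g.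
Proof. by rewrite /fp mulr_sumr; apply: eq_bigr => m _; rewrite mcoeffZ !mulrA. Qed.

Lemma fp0l g : fp 0 g = 0.
Proof. by rewrite /fp big1 // => m _; rewrite mcoeff0 !mul0r. Qed.

Lemma fpNl f g : fp (- f) g = - fp f g.
Proof. by rewrite -scaleN1r fpZl mulN1r. Qed.

Lemma fpBl f1 f2 g : fp (f1 - f2) g = fp f1 g - fp f2 g.
Proof. by rewrite fpDl fpNl. Qed.

Lemma fp_suml (I : Type) (r : seq I) (P : pred I) (F : I -> {mpoly R[3]}) g :
  fp (\sum_(i <- r | P i) F i) g = \sum_(i <- r | P i) fp (F i) g.
Proof.
rewrite /fp exchange_big /=; apply: eq_bigr => m _.
by rewrite raddf_sum !mulr_suml.
Qed.

Lemma fpDr f g1 g2 : fp f (g1 + g2) = fp f g1 + fp f g2.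
Proof. by rewrite fpC fpDl !(fpC f). Qed.
Lemma fpZr c f g : fp f (c *: g) = c * fp f g.
Proof. by rewrite fpC fpZl fpC. Qed.
Lemma fpBr f g1 g2 : fp f (g1 - g2) = fp f g1 - fp f g2.
Proof. by rewrite fpC fpBl !(fpC f). Qed.
Lemma fp0r f : fp f 0 = 0.
Proof. by rewrite fpC fp0l. Qed.

Lemma fpX p g : fp 'X_[p] g = if (mdeg p < K)%N then g@_p * mfac p else 0.
Proof.
rewrite /fp; case: ifP => hp.
  rewrite (bigD1 (BMultinom hp)) //= mcoeffX eqxx mul1r big1 ?addr0 // => m hm.
  rewrite mcoeffX; case: eqP => [e|]; last by rewrite !mul0r.
  by move: hm; rewrite -(inj_eq val_inj) /= e eqxx.
rewrite big1 // => m _; rewrite mcoeffX; case: eqP => [e|]; last by rewrite !mul0r.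
by move: (bmdeg m); rewrite -e hp.
Qed.

Lemma mcoeffXiM i g a : ('X_i * g)@_a = if (0 < a i)%N then g@_(a - U_(i))%MM else 0.
Proof.
case: ifP => hi.
  have -> : a = (U_(i) + (a - U_(i)))%MM.
    apply/mnmP => j; rewrite mnmDE mnmBE mnm1E.
    by case: eqP => [<-|_]; rewrite ?add0n ?subn0 // subnKC.
  by rewrite mulrC mcoeffMX; congr (_@__); apply/mnmP => j;
     rewrite !(mnmDE, mnmBE, mnm1E) addKn.
rewrite {1}(mpolyE g) mulr_sumr raddf_sum big1 // => m _.
rewrite -scalerAr /= mcoeffZ -mpolyXD mcoeffX.
case: eqP => [e|]; last by rewrite mulr0.
by move: hi; rewrite -e mnmDE mnm1E eqxx.
Qed.

Lemma fp_derivX i f g : (msize f <= K)%N -> fp (f^`M(i)) g = fp f ('X_i * g).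
Proof.
move=> hf; rewrite {1 2}(mpolyE f) raddf_sum /= !fp_suml.
apply: eq_big_seq => m hm; rewrite mderivZ !fpZl; congr (_ * _).
have hmK : (mdeg m < K)%N := leq_trans (msize_mdeg_lt hm) hf.
rewrite mderivX fpZl !fpX hmK (leq_ltn_trans (mdegB _ _) hmK) mcoeffXiM.
have [e|hi] := posnP (m i); first by rewrite e mulr0n mul0r /= mul0r.
rewrite /=.
by rewrite (mfacS hi) mulrCA mulrA.
Qed.

Lemma fp_Xderiv i f g : (msize g <= K)%N -> fp ('X_i * f) g = fp f (g^`M(i)).
Proof. by move=> hg; rewrite fpC -fp_derivX // fpC. Qed.

Lemma mderivXi (i j : 'I_3) : ('X_i : {mpoly R[3]})^`M(j) = (i == j)%:R.
Proof.
rewrite mderivX mnm1E; case: eqP => [->|_]; last by rewrite scale0r.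
have -> : (U_(j) - U_(j) = 0)%MM by apply/mnmP => k; rewrite mnmBE subnn mnm0E.
by rewrite mpolyX0 scale1r.
Qed.

Lemma Dst_mul f g : Dst (f * g) = Dst f * g + f * Dst g.
Proof. by rewrite /Dst !mderivM; ring. Qed.

Lemma DstD f g : Dst (f + g) = Dst f + Dst g.
Proof. by rewrite /Dst !mderivD; ring. Qed.
Lemma DstZ c f : Dst (c *: f) = c *: Dst f.
Proof. by rewrite /Dst !mderivZ -!scalerAr scalerDr. Qed.
Lemma Dst0 : Dst 0 = 0.
Proof. by rewrite /Dst !mderiv0 !mulr0 addr0. Qed.
Lemma DstB f g : Dst (f - g) = Dst f - Dst g.
Proof. by rewrite /Dst !mderivB; ring. Qed.

Lemma DstMn f n : Dst (f *+ n) = Dst f *+ n.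
Proof. by rewrite /Dst !mderivMn; ring. Qed.

Lemma DstX0 : Dst 'X_i0 = 0.
Proof. by rewrite /Dst !mderivXi /= !mulr0 addr0. Qed.
Lemma DstX1 : Dst 'X_i1 = 'X_i0.
Proof. by rewrite /Dst !mderivXi /= mulr1 mulr0 addr0. Qed.
Lemma DstX2 : Dst 'X_i2 = 'X_i1.
Proof. by rewrite /Dst !mderivXi /= mulr1 mulr0 add0r. Qed.

Definition Dk k f := iter k Dst f.

Lemma DkD k f g : Dk k (f + g) = Dk k f + Dk k g.
Proof. by elim: k => //= k ->; rewrite DstD. Qed.
Lemma DkZ k c f : Dk k (c *: f) = c *: Dk k f.
Proof. by elim: k => //= k ->; rewrite DstZ. Qed.
Lemma Dk0 k : Dk k 0 = 0.
Proof. by elim: k => //= k ->; rewrite Dst0. Qed.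
Lemma Dk_sum k (I : Type) (r : seq I) (P : pred I) (F : I -> {mpoly R[3]}) :
  Dk k (\sum_(i <- r | P i) F i) = \sum_(i <- r | P i) Dk k (F i).
Proof.
elim/big_rec2: _ => [|i x y _ <-]; first exact: Dk0.
by rewrite DkD.
Qed.

Lemma DkS k f : Dk k.+1 f = Dk k (Dst f).
Proof. exact: iterSr. Qed.

Lemma DstXm (m : 'X_{1..3}) : Dst 'X_[m] =
  (m i1)%:R *: 'X_[U_(i0) + (m - U_(i1))] + (m i2)%:R *: 'X_[U_(i1) + (m - U_(i2))].
Proof. by rewrite /Dst !mderivX !mpolyXD -!scalerAr. Qed.

Lemma Dk_nilX k (m : 'X_{1..3}) : (2 * m i2 + m i1 < k)%N -> Dk k 'X_[m] = 0.
Proof.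
elim: k m => // k ih m hk; rewrite DkS DstXm DkD !DkZ.
have t1 : (m i1)%:R *: Dk k 'X_[(U_(i0) + (m - U_(i1)))%MM] = 0 :> {mpoly R[3]}.
  have [e|p] := posnP (m i1); first by rewrite e mulr0n scale0r.
  rewrite ih ?scaler0 // !(mnmDE, mnmBE, mnm1E) /=; lia.
have t2 : (m i2)%:R *: Dk k 'X_[(U_(i1) + (m - U_(i2)))%MM] = 0 :> {mpoly R[3]}.
  have [e|p] := posnP (m i2); first by rewrite e mulr0n scale0r.
  rewrite ih ?scaler0 // !(mnmDE, mnmBE, mnm1E) /=; lia.
by rewrite t1 t2 addr0.
Qed.

Lemma Dk_nil f : exists N, Dk N f = 0.
Proof.
exists (\max_(m <- msupp f) (2 * m i2 + m i1).+1)%N.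
rewrite [X in Dk _ X](mpolyE f) Dk_sum big_seq big1 // => m hm.
rewrite DkZ Dk_nilX ?scaler0 //.
exact: (@leq_bigmax_seq _ (msupp f) xpredT (fun m : 'X_{1..3} => (2 * m i2 + m i1).+1)%N m hm).
Qed.

Lemma DkSl k f : Dst (Dk k f) = Dk k.+1 f.
Proof. by []. Qed.

Lemma Dk_add k l f : Dk (k + l) f = Dk k (Dk l f).
Proof. exact: iterD. Qed.

Lemma Dk2X2 g : Dk 2 ('X_i2 * g) =
  'X_i2 * Dk 2 g + 2%:R * ('X_i1 * Dk 1 g) + 'X_i0 * g.
Proof.
rewrite /Dk /= !(Dst_mul, DstD, DstX2, DstX1, DstX0); ring.
Qed.

Lemma DkX2 k g : Dk k.+2 ('X_i2 * g) =
  'X_i2 * Dk k.+2 g + ('X_i1 * Dk k.+1 g) *+ k.+2 + ('X_i0 * Dk k g) *+ 'C(k.+2, 2).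
Proof.
elim: k => [|k ih]; first by rewrite Dk2X2 /= mulr_natl.
rewrite [LHS]/Dk iterS -/(Dk _ _) ih.
have hC : 'C(k.+3, 2) = ('C(k.+2, 2) + k.+2)%N by rewrite binS bin1.
rewrite hC; move: ('C(k.+2, 2)) => c.
rewrite (DstD (_ + _)) DstD (DstMn _ k.+2) (DstMn _ c) (Dst_mul 'X_i2) (Dst_mul 'X_i1) (Dst_mul 'X_i0) DstX2 DstX1 DstX0 !DkSl.
rewrite mulrnDr; ring.
Qed.

Lemma natmp_neq0 n : (0 < n)%N -> (n%:R : {mpoly R[3]}) != 0.
Proof. by move=> hn; rewrite -mpolyC_nat mpolyC_eq0 pnatr_eq0 -lt0n. Qed.

Lemma Xi_neq0 (i : 'I_3) : ('X_i : {mpoly R[3]}) != 0.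
Proof.
apply/eqP => h; have := @mcoeffXU 3 R i i; rewrite h mcoeff0 eqxx => /eqP.
by rewrite eq_sym oner_eq0.
Qed.

Lemma key g : Dk 3 ('X_i2 * g) = 0 -> Dst g = 0.
Proof.
move=> h3.
have step k : (0 < k)%N -> Dk k.+2 g = 0 -> Dk k.+1 g = 0 -> Dk k g = 0.
  move=> hk e2 e1.
  have : Dk k.+2 ('X_i2 * g) = 0.
    have -> : (k.+2 = (k - 1) + 3)%N by lia.
    by rewrite Dk_add h3 Dk0.
  rewrite DkX2 e2 e1 !mulr0 mul0rn !add0r -mulr_natl => /eqP; rewrite mulf_eq0 => /orP[].
    by rewrite (negbTE (natmp_neq0 _)) // bin_gt0.
  by rewrite mulf_eq0 (negbTE (Xi_neq0 _)) /= => /eqP.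
have [N hN] := Dk_nil g.
have hz j : (N <= j)%N -> Dk j g = 0.
  by move=> hj; rewrite -(subnK hj) Dk_add hN Dk0.
have main t : forall j, (0 < j)%N -> (N <= j + t)%N -> Dk j g = 0.
  elim: t => [|t ih] j hj hjt; first by apply: hz; rewrite addn0 in hjt.
  by apply: step => //; apply: ih => //; lia.
exact: (main N 1%N).
Qed.

Lemma msize_homog d f : f \is d.-homog -> (msize f <= d.+1)%N.
Proof.
move=> /dhomogP hf; rewrite msizeE; apply/bigmax_leqP_seq => m hm _.
by rewrite (hf m hm).
Qed.

Lemma mdegBU (m : 'X_{1..3}) i : (0 < m i)%N -> mdeg (m - U_(i))%MM = (mdeg m).-1.
Proof.
move=> hi; have e : m = ((m - U_(i)) + U_(i))%MM.
  apply/mnmP => j; rewrite mnmDE mnmBE mnm1E; case: eqP => [<-|_]; last by rewrite subn0 addn0.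
  by rewrite subnK.
by rewrite [in RHS]e mdegD mdeg1 addn1.
Qed.

Lemma dhomog_deriv i d f : f \is d.+1.-homog -> f^`M(i) \is d.-homog.
Proof.
move=> hf; rewrite (mpolyE f) raddf_sum /= big_seq rpred_sum // => m hm.
rewrite mderivZ mderivX scalerA.
have [e|p] := posnP (m i); first by rewrite e mulr0n mulr0 scale0r rpred0.
rewrite rpredZ // dhomogX; apply/eqP.
by transitivity (mdeg (m - U_(i))%MM) => //; rewrite (mdegBU p) (dhomogP _ _ _ hf m hm).
Qed.

Lemma dhomogXi d (i : 'I_3) f : f \is d.-homog -> 'X_i * f \is d.+1.-homog.
Proof.
move=> hf; have hX : ('X_i : {mpoly R[3]}) \is 1.-homog by rewrite dhomogX; apply/eqP; exact: mdeg1.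
exact: (dhomogM hX hf).
Qed.

Lemma Dop_homog d f : f \is d.+1.-homog -> Dop f \is d.+1.-homog.
Proof. by move=> hf; rewrite /Dop rpredD // dhomogXi // dhomog_deriv. Qed.
Lemma Dst_homog d f : f \is d.+1.-homog -> Dst f \is d.+1.-homog.
Proof. by move=> hf; rewrite /Dst rpredD // dhomogXi // dhomog_deriv. Qed.

Lemma DopD f g : Dop (f + g) = Dop f + Dop g.
Proof. by rewrite /Dop !mderivD; ring. Qed.
Lemma DopZ c f : Dop (c *: f) = c *: Dop f.
Proof. by rewrite /Dop !mderivZ -!scalerAr scalerDr. Qed.
Lemma Dop0 : Dop 0 = 0.
Proof. by rewrite /Dop !mderiv0 !mulr0 addr0. Qed.
Lemma DopB f g : Dop (f - g) = Dop f - Dop g.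
Proof. by rewrite /Dop !mderivB; ring. Qed.
Lemma Dop_sum (I : Type) (r : seq I) (P : pred I) (F : I -> {mpoly R[3]}) :
  Dop (\sum_(i <- r | P i) F i) = \sum_(i <- r | P i) Dop (F i).
Proof.
elim/big_rec2: _ => [|i x y _ <-]; first exact: Dop0.
by rewrite DopD.
Qed.

Lemma fp_Dop f g : (msize f <= K)%N -> (msize g <= K)%N -> fp (Dop f) g = fp f (Dst g).
Proof.
by move=> hf hg; rewrite /Dop /Dst fpDl !fp_Xderiv // !fp_derivX // fpDr.
Qed.

Lemma ord3P (l : 'I_3) : [\/ l = i0, l = i1 | l = i2].
Proof.
case: l => [[|[|[|l]]] hl] //.
- by constructor 1; exact: val_inj.
- by constructor 2; exact: val_inj.
- by constructor 3; exact: val_inj.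
Qed.

Lemma adN_homog d (h : vfield R) : (forall i, h i \is d.+1.-homog) ->
  forall i, adN h i \is d.+1.-homog.
Proof.
move=> hh i; case: (ord3P i) => ->;
  rewrite ?adN0 ?adN1 ?adN2 ?rpredB ?Dop_homog //.
Qed.

Lemma adN_lin (I : Type) (r : seq I) (P : pred I) (c : I -> R) (H : I -> vfield R) l :
  adN (fun i => \sum_(j <- r | P j) c j *: H j i) l = \sum_(j <- r | P j) c j *: adN (H j) l.
Proof.
case: (ord3P l) => ->; rewrite ?adN0 ?adN1 ?adN2 Dop_sum;
  rewrite ?(eq_bigr _ (fun j _ => DopZ (c j) _)) //;
  rewrite -?sumrB; apply: eq_bigr => j _; rewrite ?adN0 ?adN1 ?adN2 ?scalerBr //.
Qed.

Lemma adN0f : adN (fun _ => 0 : {mpoly R[3]}) =1 (fun _ => 0).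
Proof.
by move=> l; case: (ord3P l) => ->; rewrite ?adN0 ?adN1 ?adN2 Dop0 ?subr0.
Qed.

Lemma mdeg3 (m : 'X_{1..3}) : mdeg m = (m i0 + m i1 + m i2)%N.
Proof.
rewrite mdegE !big_ord_recr big_ord0 /=.
have -> : (ord_max : 'I_3) = i2 by exact: val_inj.
have -> : (widen_ord (leqnSn 2) ord_max : 'I_3) = i1 by exact: val_inj.
by have -> : (widen_ord (leqnSn 2) (widen_ord (leqnSn 1) ord_max) : 'I_3) = i0 by exact: val_inj.
Qed.

Lemma mdeg2 (m : 'X_{1..2}) : mdeg m = (m ord0 + m ord_max)%N.
Proof.
rewrite mdegE !big_ord_recr big_ord0 /=.
by have -> : (widen_ord (leqnSn 1) ord_max : 'I_2) = ord0 by exact: val_inj.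
Qed.

Lemma XXE (m : 'X_{1..3}) : m i2 = 0%N -> 'X_i0 ^+ m i0 * 'X_i1 ^+ m i1 = 'X_[m] :> {mpoly R[3]}.
Proof.
move=> h2; rewrite [RHS]mpolyXE_id !big_ord_recr big_ord0 /= mul1r.
have -> : (ord_max : 'I_3) = i2 by exact: val_inj.
have -> : (widen_ord (leqnSn 2) ord_max : 'I_3) = i1 by exact: val_inj.
have -> : (widen_ord (leqnSn 2) (widen_ord (leqnSn 1) ord_max) : 'I_3) = i0 by exact: val_inj.
by rewrite h2 expr0 mulr1.
Qed.

Lemma Xn_homog (n : nat) (i : 'I_n) k1 : ('X_i : {mpoly R[n]}) ^+ k1 \is k1.-homog.
Proof.
rewrite mpolyXn dhomogX; apply/eqP.
by transitivity (mdeg (U_(i) *+ k1)%MM) => //; rewrite mdegMn mdeg1 mul1n.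
Qed.

Lemma XX_homog (n : nat) (i j : 'I_n) k1 k2 : ('X_i : {mpoly R[n]}) ^+ k1 * 'X_j ^+ k2 \is (k1 + k2).-homog.
Proof. exact: dhomogM (Xn_homog _ _) (Xn_homog _ _). Qed.

Lemma Xn_deriv (i j : 'I_3) a : i != j -> (('X_i : {mpoly R[3]}) ^+ a)^`M(j) = 0.
Proof. by move=> hij; rewrite mpolyXn mderivX mulmnE mnm1E (negbTE hij) mul0n scale0r. Qed.

Lemma XX_deriv2 a b : (('X_i0 : {mpoly R[3]}) ^+ a * 'X_i1 ^+ b)^`M(i2) = 0.
Proof. by rewrite mderivM !Xn_deriv // mul0r mulr0 addr0. Qed.

Lemma embedX (m : 'X_{1..2}) : @embed_xy R 'X_[m] = 'X_i0 ^+ m ord0 * 'X_i1 ^+ m ord_max.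
Proof.
rewrite /embed_xy comp_mpolyX !big_ord_recr big_ord0 /= mul1r.
by have -> : (widen_ord (leqnSn 1) ord_max : 'I_2) = ord0 by exact: val_inj.
Qed.

Lemma embedE (p : {mpoly R[2]}) : embed_xy p =
  \sum_(m <- msupp p) p@_m *: ('X_i0 ^+ m ord0 * 'X_i1 ^+ m ord_max).
Proof. by rewrite /embed_xy comp_mpolyEX; apply: eq_bigr => m _; rewrite -embedX. Qed.

Lemma embed_homog d (p : {mpoly R[2]}) : p \is d.-homog -> embed_xy p \is d.-homog.
Proof.
move=> hp; rewrite embedE big_seq rpred_sum // => m hm; rewrite rpredZ //.
have := XX_homog i0 i1 (m ord0) (m ord_max).
by rewrite -mdeg2 (dhomogP _ _ _ hp m hm).
Qed.

Lemma embed_d2 (p : {mpoly R[2]}) : (embed_xy p)^`M(i2) = 0.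
Proof.
rewrite embedE raddf_sum /= big1 // => m _.
by rewrite mderivZ XX_deriv2 scaler0.
Qed.

Lemma embed_lin (I : Type) (r : seq I) (P : pred I) (c : I -> R) (F : I -> {mpoly R[2]}) :
  embed_xy (\sum_(j <- r | P j) c j *: F j) = \sum_(j <- r | P j) c j *: embed_xy (F j).
Proof. by rewrite /embed_xy raddf_sum /=; apply: eq_bigr => j _; rewrite comp_mpolyZ. Qed.

Lemma embed_XX a b : @embed_xy R ('X_ord0 ^+ a * 'X_ord_max ^+ b) = 'X_i0 ^+ a * 'X_i1 ^+ b.
Proof. by rewrite /embed_xy rmorphM !rmorphXn /= !comp_mpolyXU. Qed.

Lemma Dst1 : Dst 1 = 0.
Proof. by rewrite /Dst -mpolyC1 !mderivC !mulr0 addr0. Qed.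

Lemma Dst_pow f k : Dst f = 0 -> Dst (f ^+ k) = 0.
Proof.
move=> hf; elim: k => [|k ih]; first by rewrite expr0 Dst1.
by rewrite exprS Dst_mul hf ih mul0r mulr0 addr0.
Qed.

Lemma homog_zero d f : (d < K)%N -> f \is d.-homog ->
  (forall m : 'X_{1..3}, mdeg m = d -> fp 'X_[m] f = 0) -> f = 0.
Proof.
move=> hK hf hm; apply/mpolyP => m; rewrite mcoeff0.
have [e|ne] := eqVneq (mdeg m) d; last exact: (dhomog_nemf_coeff hf ne).
have := hm m e; rewrite fpX e hK => /eqP; rewrite mulf_eq0 (negbTE (mfac_neq0 _)) orbF.
by move/eqP.
Qed.

Lemma disj e h0 q : (e.+2 <= K)%N ->
  h0 \is e.+1.-homog -> q \is e.+1.-homog -> q^`M(i2) = 0 -> Dop (Dop (Dop h0)) = q -> q = 0.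
Proof.
move=> hK hh hq hq2 hD.
have sz f : f \is e.+1.-homog -> (msize f <= K)%N.
  by move=> hf; exact: leq_trans (msize_homog hf) hK.
have fpz g : g \is e.+1.-homog -> Dk 2 g = 0 -> fp q g = 0.
  move=> hg h2; rewrite -hD fp_Dop ?sz ?Dop_homog //.
  rewrite fp_Dop ?sz ?Dop_homog ?Dst_homog //.
  by have -> : Dst (Dst g) = Dk 2 g by []; rewrite h2 fp0r.
apply/mpolyP => m; rewrite mcoeff0.
have [ne|de] := eqVneq (mdeg m) e.+1; last exact: (dhomog_nemf_coeff hq de).
have [z2|p2] := posnP (m i2); last first.
  have := mcoeff_deriv i2 (m - U_(i2))%MM q; rewrite hq2 mcoeff0.
  have -> : (m - U_(i2) + U_(i2))%MM = m.
    apply/mnmP => j; rewrite mnmDE mnmBE mnm1E; case: eqP => [<-|_]; last by rewrite subn0 addn0.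
    by rewrite subnK.
  by move/eqP; rewrite eq_sym mulrn_eq0 /= => /eqP.
set a := m i0; set b := m i1.
pose u : {mpoly R[3]} := 'X_i1 ^+ 2 - ('X_i0 * 'X_i2) *+ 2.
have Du : Dst u = 0.
  rewrite /u DstB DstMn Dst_mul expr2 Dst_mul DstX0 DstX1 DstX2; ring.
pose g : {mpoly R[3]} := 'X_i0 ^+ a * 'X_i1 ^+ (odd b) * u ^+ b./2.
have hu : u \is 2.-homog.
  rewrite /u rpredB ?rpredMn ?Xn_homog //.
  have h1 : ('X_i0 : {mpoly R[3]}) \is 1.-homog by rewrite dhomogX; apply/eqP; exact: mdeg1.
  have h2 : ('X_i2 : {mpoly R[3]}) \is 1.-homog by rewrite dhomogX; apply/eqP; exact: mdeg1.
  exact: (dhomogM h1 h2).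
have hg : g \is e.+1.-homog.
  have := dhomogM (XX_homog i0 i1 a (odd b)) (dhomogMn b./2 hu).
  by rewrite -addnA mul2n odd_double_half -ne mdeg3 z2 addn0.
have Dg : Dk 2 g = 0.
  have e1 : Dst g = 'X_i0 ^+ a * Dst ('X_i1 ^+ odd b) * u ^+ b./2.
    by rewrite /g !Dst_mul (Dst_pow _ Du) (Dst_pow _ DstX0); ring.
  have -> : Dk 2 g = Dst (Dst g) by [].
  rewrite e1 !Dst_mul (Dst_pow _ Du) (Dst_pow _ DstX0).
  by case: (odd b); rewrite ?expr1 ?expr0 ?DstX1 ?DstX0 ?Dst1 ?Dst0; ring.
have := fpz g hg Dg.
pose S := \sum_(i < b./2) u ^+ (b./2.-1 - i) * ('X_i1 ^+ 2) ^+ i.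
have gE : g = 'X_[m] + 'X_i2 * ('X_i0 ^+ a * 'X_i1 ^+ odd b * (- ('X_i0 *+ 2) * S)).
  have hX : u ^+ b./2 = ('X_i1 ^+ 2) ^+ b./2 + (u - 'X_i1 ^+ 2) * S.
    by rewrite -subrXX addrC subrK.
  rewrite -XXE // /g hX.
  have -> : ('X_i1 : {mpoly R[3]}) ^+ b = 'X_i1 ^+ odd b * ('X_i1 ^+ 2) ^+ b./2.
    by rewrite -exprM -exprD mul2n odd_double_half.
  rewrite /u; ring.
rewrite gE fpDr fpC fpX ne hK -fp_derivX ?sz // hq2 fp0l addr0 => /eqP.
by rewrite mulf_eq0 (negbTE (mfac_neq0 _)) orbF => /eqP.
Qed.

Lemma sum3 (F : 'I_3 -> R) : \sum_(i < 3) F i = F i0 + F i1 + F i2.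
Proof.
rewrite !big_ord_recr big_ord0 /= add0r.
have -> : (ord_max : 'I_3) = i2 by exact: val_inj.
have -> : (widen_ord (leqnSn 2) ord_max : 'I_3) = i1 by exact: val_inj.
by have -> : (widen_ord (leqnSn 2) (widen_ord (leqnSn 1) ord_max) : 'I_3) = i0 by exact: val_inj.
Qed.

Lemma sum3p (F : 'I_3 -> {mpoly R[3]}) : \sum_(i < 3) F i = F i0 + F i1 + F i2.
Proof.
rewrite !big_ord_recr big_ord0 /= add0r.
have -> : (ord_max : 'I_3) = i2 by exact: val_inj.
have -> : (widen_ord (leqnSn 2) ord_max : 'I_3) = i1 by exact: val_inj.
by have -> : (widen_ord (leqnSn 2) (widen_ord (leqnSn 1) ord_max) : 'I_3) = i0 by exact: val_inj.
Qed.

Lemma coefT (P : pred 'X_{1..3 < K}) (c : 'X_{1..3 < K} -> R) (m : 'X_{1..3 < K}) :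
  (\sum_(m' : 'X_{1..3 < K} | P m') c m' *: 'X_[m'])@_m = if P m then c m else 0.
Proof.
rewrite raddf_sum /=.
under eq_bigr => m' _ do rewrite mcoeffZ mcoeffX.
case: ifP => hP.
  rewrite (bigD1 m) //= eqxx mulr1 big1 ?addr0 // => m' /andP[_ hm'].
  by rewrite -bmeqP (negbTE hm') mulr0.
rewrite big1 // => m' hm'; case: eqP => [e|]; last by rewrite mulr0.
have : m' = m by apply: val_inj.
by move=> em; rewrite em hP in hm'.
Qed.

Definition Gf (dd : nat) (kk : 'I_3 * 'X_{1..3 < K} -> R) (i : 'I_3) : {mpoly R[3]} :=
  \sum_(m : 'X_{1..3 < K} | mdeg m == dd) (kk (i, m) / mfac m) *: 'X_[m].

Lemma Gf_homog dd kk i : Gf dd kk i \is dd.-homog.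
Proof.
rewrite /Gf rpred_sum // => m hm; rewrite rpredZ // dhomogX.
by apply/eqP; move/eqP: hm.
Qed.

Lemma pair_sum dd kk (w : vfield R) : (forall i, w i \is dd.-homog) ->
  \sum_(x : 'I_3 * 'X_{1..3 < K}) (w x.1)@_x.2 * kk x =
  \sum_(i < 3) fp (w i) (Gf dd kk i).
Proof.
move=> hw.
transitivity (\sum_(x : 'I_3 * 'X_{1..3 < K}) (fun i (m : 'X_{1..3 < K}) => (w i)@_m * kk (i, m)) x.1 x.2).
  by apply: eq_bigr => -[i m] _.
rewrite -(pair_bigA _ (fun i (m : 'X_{1..3 < K}) => (w i)@_m * kk (i, m))) /=.
apply: eq_bigr => i _.
rewrite /fp; apply: eq_bigr => m _; rewrite /Gf coefT.
case: ifP => hm; first by rewrite mulrA divfK ?mfac_neq0.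
by rewrite (dhomog_nemf_coeff (hw i) (negbT hm)) !mul0r.
Qed.

Definition hb e (j : 'I_3 * 'X_{1..3 < K} + 'X_{1..3 < K}) : vfield R := fun l =>
  match j with
  | inl (i, m) => if (l == i) && (mdeg m == e.+1) then 'X_[m] else 0
  | inr _ => 0
  end.

Definition pb e (j : 'I_3 * 'X_{1..3 < K} + 'X_{1..3 < K}) : {mpoly R[2]} :=
  match j with
  | inl _ => 0
  | inr m => if (mdeg m == e.+1) && (m i2 == 0%N) then 'X_ord0 ^+ m i0 * 'X_ord_max ^+ m i1 else 0
  end.

Definition sF e j : vfield R := fun l =>
  adN (hb e j) l + (if l == i2 then embed_xy (pb e j) else 0).

Lemma hb_homog e j l : hb e j l \is e.+1.-homog.
Proof.
case: j => [[i m]|m] /=; last exact: rpred0.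
case: ifP => [/andP[_ /eqP h]|_]; last exact: rpred0.
by rewrite dhomogX; apply/eqP.
Qed.

Lemma pb_homog e j : pb e j \is e.+1.-homog.
Proof.
case: j => [[i m]|m] /=; first exact: rpred0.
case: ifP => [/andP[/eqP h /eqP h2]|_]; last exact: rpred0.
by have := XX_homog (ord0 : 'I_2) ord_max (m i0) (m i1); rewrite -h mdeg3 h2 addn0.
Qed.

Lemma sF_homog e j l : sF e j l \is e.+1.-homog.
Proof.
rewrite /sF rpredD ?adN_homog // => [i|]; first exact: hb_homog.
case: ifP => _; last exact: rpred0.
exact/embed_homog/pb_homog.
Qed.

Lemma Pw_adN e kk (h : vfield R) : (e.+2 <= K)%N -> (forall i, h i \is e.+1.-homog) ->
  \sum_(i < 3) fp (adN h i) (Gf e.+1 kk i) =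
  fp (h i0) (Dst (Gf e.+1 kk i0)) + fp (h i1) (Dst (Gf e.+1 kk i1) - Gf e.+1 kk i0) +
  fp (h i2) (Dst (Gf e.+1 kk i2) - Gf e.+1 kk i1).
Proof.
move=> hK hh.
have sz f : f \is e.+1.-homog -> (msize f <= K)%N.
  by move=> hf; exact: leq_trans (msize_homog hf) hK.
rewrite sum3 adN0 adN1 adN2 !fpBl !fp_Dop ?sz ?Gf_homog // !fpBr; ring.
Qed.

Lemma dual e kk (v : vfield R) : (e.+2 <= K)%N ->
  (forall j, \sum_(x : 'I_3 * 'X_{1..3 < K}) (sF e j x.1)@_x.2 * kk x = 0) ->
  (forall i, v i \is e.+1.-homog) -> divergence v = 0 ->
  \sum_(x : 'I_3 * 'X_{1..3 < K}) (v x.1)@_x.2 * kk x = 0.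
Proof.
move=> hK hJ hv hdiv.
set G := Gf e.+1 kk.
have hG i : G i \is e.+1.-homog := Gf_homog e.+1 kk i.
have sz f : f \is e.+1.-homog -> (msize f <= K)%N.
  by move=> hf; exact: leq_trans (msize_homog hf) hK.
have PJ j : \sum_(i < 3) fp (sF e j i) (G i) = 0.
  by rewrite -pair_sum ?hJ // => i; exact: sF_homog.
have hbm (m : 'X_{1..3}) : mdeg m = e.+1 -> (mdeg m < K)%N.
  by move=> ->.
have PA i (m : 'X_{1..3}) (hm : mdeg m = e.+1) :
    \sum_(l < 3) fp (adN (hb e (inl (i, BMultinom (hbm m hm)))) l) (G l) = 0.
  rewrite -[RHS](PJ (inl (i, BMultinom (hbm m hm)))); apply: eq_bigr => l _.
  by rewrite /sF /= /embed_xy comp_mpoly0 if_same addr0.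
have A0 : Dst (G i0) = 0.
  apply: (homog_zero (d := e.+1)) => //; first exact: Dst_homog.
  move=> m hm; have := PA i0 m hm; rewrite Pw_adN //; last by move=> l; exact: hb_homog.
  by rewrite /hb /= hm eqxx /= !fp0l !addr0.
have A1 : Dst (G i1) = G i0.
  apply/eqP; rewrite -subr_eq0; apply/eqP.
  apply: (homog_zero (d := e.+1)) => //; first by apply: rpredB; [apply: Dst_homog; exact: hG|exact: hG].
  move=> m hm; have := PA i1 m hm; rewrite Pw_adN //; last by move=> l; exact: hb_homog.
  by rewrite /hb /= hm eqxx /= !fp0l add0r addr0.
have A2 : Dst (G i2) = G i1.
  apply/eqP; rewrite -subr_eq0; apply/eqP.
  apply: (homog_zero (d := e.+1)) => //; first by apply: rpredB; [apply: Dst_homog; exact: hG|exact: hG].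
  move=> m hm; have := PA i2 m hm; rewrite Pw_adN //; last by move=> l; exact: hb_homog.
  by rewrite /hb /= hm eqxx /= !fp0l !add0r.
have B (m : 'X_{1..3}) : mdeg m = e.+1 -> m i2 = 0%N -> (G i2)@_m = 0.
  move=> hm h2; have := PJ (inr (BMultinom (hbm m hm))).
  rewrite sum3 /sF /= !adN0f /= hm h2 eqxx /= embed_XX XXE // !add0r fpX hm hK.
  by rewrite !fp0l !add0r => /eqP; rewrite mulf_eq0 (negbTE (mfac_neq0 _)) orbF => /eqP.
pose g' := \sum_(m <- msupp (G i2)) (G i2)@_m *: 'X_[(m - U_(i2))%MM].
have hG2 : G i2 = 'X_i2 * g'.
  rewrite {1}(mpolyE (G i2)) /g' mulr_sumr; apply: eq_big_seq => m hm.
  rewrite -scalerAr; congr (_ *: _).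
  have hmd : mdeg m = e.+1 by exact: (dhomogP _ _ _ (hG i2) m hm).
  have p2 : (0 < m i2)%N.
    rewrite lt0n; apply/negP => /eqP h2; move: hm; rewrite mcoeff_msupp B //.
    by rewrite eqxx.
  rewrite -mpolyXD; congr 'X_[_]; apply/mnmP => j.
  rewrite mnmDE mnmBE mnm1E; case: eqP => [<-|_]; last by rewrite subn0.
  by rewrite addnC subnK.
have D3 : Dk 3 ('X_i2 * g') = 0.
  rewrite -hG2; have -> : Dk 3 (G i2) = Dst (Dst (Dst (G i2))) by [].
  by rewrite A2 A1 A0.
have Dg := key D3.
have G1E : G i1 = 'X_i1 * g' by rewrite -A2 hG2 Dst_mul DstX2 Dg mulr0 addr0.
have G0E : G i0 = 'X_i0 * g' by rewrite -A1 G1E Dst_mul DstX1 Dg mulr0 addr0.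
rewrite (pair_sum _ hv) sum3 -/G G0E G1E hG2 -!fp_derivX ?sz // -!fpDl.
have <- : divergence v = (v i0)^`M(i0) + (v i1)^`M(i1) + (v i2)^`M(i2).
  by rewrite /divergence sum3p.
by rewrite hdiv fp0l.
Qed.

Local Notation TI := ('I_3 * 'X_{1..3 < K})%type.
Local Notation TJ := (('I_3 * 'X_{1..3 < K}) + 'X_{1..3 < K})%type.

Definition evI (l : 'I_#|{: TI}|) : TI := enum_val l.
Definition evJ (l : 'I_#|{: TJ}|) : TJ := enum_val l.

Definition cI (v : vfield R) : 'rV[R]_#|{: TI}| :=
  \row_l (v (evI l).1)@_((evI l).2 : 'X_{1..3}).

Definition Mx e : 'M[R]_(#|{: TJ}|, #|{: TI}|) :=
  \matrix_(r, l) (sF e (evJ r) (evI l).1)@_((evI l).2 : 'X_{1..3}).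

Lemma sum_enum (F : TI -> R) :
  \sum_(l < #|{: TI}|) F (evI l) = \sum_(x : TI) F x.
Proof. by rewrite -(big_enum_val F). Qed.

Lemma inspan e (v : vfield R) : (e.+2 <= K)%N ->
  (forall i, v i \is e.+1.-homog) -> divergence v = 0 ->
  exists c : 'rV[R]_#|{: TJ}|, cI v = c *m Mx e.
Proof.
move=> hK hv hdiv; apply/submxP; rewrite submxE; apply/eqP/matrixP => i c.
rewrite !mxE.
set C := cokermx (Mx e).
have hMC : Mx e *m C = 0 by exact: mulmx_coker.
pose kk (x : TI) := C (enum_rank x) c.
transitivity (\sum_(x : TI) (v x.1)@_x.2 * kk x).
  rewrite -sum_enum; apply: eq_bigr => l _.
  by rewrite /kk /evI enum_valK mxE.
apply: (dual hK) => // j.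
have := congr1 (fun M : 'M[R]_(#|{: TJ}|, #|{: TI}|) => M (enum_rank j) c) hMC; rewrite !mxE => h; rewrite -[RHS]h.
rewrite -sum_enum; apply: eq_bigr => l _.
rewrite /kk /evI enum_valK; congr (_ * _).
by rewrite mxE /evJ enum_rankK.
Qed.

Lemma decomp e (v : vfield R) : (e.+2 <= K)%N ->
  (forall i, v i \is e.+1.-homog) -> divergence v = 0 ->
  exists h : vfield R, exists p : {mpoly R[2]},
    [/\ (forall i, h i \is e.+1.-homog), p \is e.+1.-homog &
        forall i, v i = adN h i + (if i == i2 then embed_xy p else 0)].
Proof.
move=> hK hv hdiv; have [c hc] := inspan hK hv hdiv.
pose h : vfield R := fun i => \sum_r c 0 r *: hb e (evJ r) i.
pose p := \sum_r c 0 r *: pb e (evJ r).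
exists h, p; split.
- by move=> i; rewrite rpred_sum // => r _; rewrite rpredZ // hb_homog.
- by rewrite rpred_sum // => r _; rewrite rpredZ // pb_homog.
move=> i.
have hS : adN h i + (if i == i2 then embed_xy p else 0) = \sum_r c 0 r *: sF e (evJ r) i.
  rewrite /h (adN_lin _ _ (fun r => c 0 r) (fun r => hb e (evJ r))) /p embed_lin /sF.
  case: (i == i2).
    rewrite -big_split /=; apply: eq_bigr => r _.
    by rewrite -scalerDr.
  rewrite addr0; apply: eq_bigr => r _.
  by rewrite addr0.
rewrite hS; apply/mpolyP => m.
have [ne|de] := eqVneq (mdeg m) e.+1; last first.
  rewrite (dhomog_nemf_coeff (hv i) de) (dhomog_nemf_coeff _ de) //.
  by rewrite rpred_sum // => r _; rewrite rpredZ // sF_homog.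
have hm : (mdeg m < K)%N by rewrite ne.
pose bm := BMultinom hm.
have := congr1 (fun M : 'rV[R]_#|{: TI}| => M 0 (enum_rank (i, bm))) hc.
rewrite !mxE /evI enum_rankK /= => ->.
rewrite raddf_sum /=; apply: eq_bigr => r _.
by rewrite mcoeffZ mxE /evI enum_rankK.
Qed.

Lemma divE (v : vfield R) : divergence v = (v i0)^`M(i0) + (v i1)^`M(i1) + (v i2)^`M(i2).
Proof. by rewrite /divergence sum3p. Qed.

End S.

Theorem lemma10 (R : realFieldType) (d : nat) (hd : (1 <= d)%N) :
  direct_sum_decomp (V3 (R := R) d)
    (fun v => rng_adN d v /\ V3 d v) (Wd (R := R) d).
Proof.
case: d hd => // e _.
have hi02 : (i0 == i2) = false by [].
have hi12 : (i1 == i2) = false by [].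
split.
- by move=> a [_ ha].
- move=> b [p hp hb]; split.
    by move=> i; rewrite hb; case: ifP => _; [exact: embed_homog | exact: rpred0].
  by rewrite divE !hb hi02 hi12 eqxx !mderiv0 embed_d2 !addr0.
- move=> v [hv hdiv].
  have [h [p [hh hp hE]]] := decomp (K := e.+2) (leqnn _) hv hdiv.
  exists (fun i => adN h i), (fun i => if i == i2 then embed_xy p else 0).
  split; last exact: hE.
    split; first by exists h.
    split; first exact: adN_homog.
    have ea i : adN h i = v i - (if i == i2 then embed_xy p else 0) by rewrite hE addrK.
    by rewrite divE !ea hi02 hi12 eqxx !subr0 mderivB embed_d2 subr0 -divE.
  by exists p.
- move=> v [[h hh hv] _] [p hp hw] i.
  have q0 : embed_xy p = 0.
    have e0 := hv i0; have e1 := hv i1; have e2 := hv i2.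
    rewrite hw hi02 adN0 in e0; rewrite hw hi12 adN1 in e1; rewrite hw eqxx adN2 in e2.
    apply: (disj (K := e.+2) (leqnn _) (hh i0)); first exact: embed_homog.
      exact: embed_d2.
    have -> : Dop (h i0) = h i1 by apply/eqP; rewrite -subr_eq0 -e0.
    have -> : Dop (h i1) = h i2 by apply/eqP; rewrite -subr_eq0 -e1.
    by rewrite e2.
  by rewrite hw q0 if_same.
Qed.
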